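(* Let $\sigma\in S_K$ be a permutation pattern whose length is at most one less than the length of the longest element of $S_K$, i.e. $\operatorname{len}(\sigma)\ge\binom{K}{2}-1$. Then $\sigma$ admits a bountiful width system.
   Context: $\operatorname{len}(\sigma)$ is the Coxeter length (number of inversions) of $\sigma$; the longest element of $S_K$ has length $\binom K2$. For $x=[x_1,\dots,x_N]\in S_N$ and $\tau\in S_k$, an instance of $\tau$ in $x$ is a tuple of positions $P=(P_1<\dots<P_k)$ with $(x_{P_1},\dots,x_{P_k})$ in the same relative order as $\tau$. A width system for $\tau$ is a finite sequence of pairs $(a_1,b_1),\dots,(a_m,b_m)$ with $1\le a_l<b_l\le k$, assigning to each instance $P$ the tuple $w(P)=(P_{b_1}-P_{a_1},\dots,P_{b_m}-P_{a_m})$. An instance is minimal in $x$ if $w(P)$ is lexicographically minimal among all instances of $\tau$ in $x$, and locally minimal if it is a minimal instance of $\tau$ in the consecutive segment $[x_{P_1},x_{P_1+1},\dots,x_{P_k}]$. The width system is bountiful if for every $x\in S_N$ (any $N$), every locally minimal instance $P$ and every position $t$ with $P_1<t<P_k$, $t\notin\{P_1,\dots,P_k\}$, either $x_t<x_{P_j}$ for all $j$ with $P_j<t$, or $x_t>x_{P_j}$ for all $j$ with $P_j>t$. $\tau$ admits a bountiful width system if some width system for $\tau$ is bountiful. *)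

(* Defs.v *)
From mathcomp Require Import all_boot all_order all_fingroup.
Set Implicit Arguments. Unset Strict Implicit. Unset Printing Implicit Defensive.

Definition coxeter_len (K : nat) (s : 'S_K) : nat :=
  #|[set ij : 'I_K * 'I_K | (ij.1 < ij.2) && (s ij.2 < s ij.1)]|.

(* The one-line notation [x_1,...,x_N] of x in S_N, as a sequence of values
   (values and positions are 0-based). *)
Definition perm_seq (N : nat) (x : 'S_N) : seq nat :=
  [seq val (x i) | i <- enum 'I_N].

Definition is_instance (k : nat) (tau : 'S_k) (s : seq nat) (P : 'I_k -> nat)
  : Prop :=
  (forall i, P i < size s) /\
  (forall i j : 'I_k, i < j -> P i < P j) /\
  (forall i j : 'I_k, (nth 0 s (P i) < nth 0 s (P j)) = (tau i < tau j)).

Definition width_system (k : nat) (w : seq ('I_k * 'I_k)) : bool :=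
  all (fun p : 'I_k * 'I_k => p.1 < p.2) w.

Definition widths (k : nat) (w : seq ('I_k * 'I_k)) (P : 'I_k -> nat) : seq nat :=
  [seq P p.2 - P p.1 | p <- w].

Fixpoint lex_le (u v : seq nat) : bool :=
  match u, v with
  | [::], _ => true
  | _ :: _, [::] => false
  | a :: u', b :: v' => (a < b) || ((a == b) && lex_le u' v')
  end.

Definition minimal_instance (k : nat) (tau : 'S_k) (w : seq ('I_k * 'I_k))
  (s : seq nat) (P : 'I_k -> nat) : Prop :=
  is_instance tau s P /\
  forall Q, is_instance tau s Q -> lex_le (widths w P) (widths w Q).

(* Locally minimal: P is a minimal instance of tau in the consecutive segment
   s_{P_1}, ..., s_{P_k} of s (positions shifted by P_1). *)
Definition locally_minimal (k : nat) (tau : 'S_k) (w : seq ('I_k * 'I_k))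
  (s : seq nat) (P : 'I_k -> nat) : Prop :=
  is_instance tau s P /\
  forall a b : nat,
    (exists i, P i = a) -> (exists j, P j = b) -> (forall i, a <= P i <= b) ->
    minimal_instance tau w (drop a (take b.+1 s)) (fun i => P i - a).

Definition bountiful (k : nat) (tau : 'S_k) (w : seq ('I_k * 'I_k)) : Prop :=
  forall (N : nat) (x : 'S_N) (P : 'I_k -> nat),
    locally_minimal tau w (perm_seq x) P ->
    forall t : nat,
      (exists i j, P i < t < P j) ->
      (forall i, P i != t) ->
      (forall j, P j < t -> nth 0 (perm_seq x) t < nth 0 (perm_seq x) (P j)) \/
      (forall j, t < P j -> nth 0 (perm_seq x) (P j) < nth 0 (perm_seq x) t).

Definition admits_bountiful (k : nat) (tau : 'S_k) : Prop :=
  exists w : seq ('I_k * 'I_k), width_system w /\ bountiful tau w.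

(* Main.v *)
Require Import Defs.
From mathcomp Require Import all_boot all_order all_fingroup zify.
Set Implicit Arguments. Unset Strict Implicit. Unset Printing Implicit Defensive.

Lemma card_lt_pairs (K : nat) :
  #|[set ij : 'I_K * 'I_K | ij.1 < ij.2]| = 'C(K, 2).
Proof.
set L := [set ij : 'I_K * 'I_K | ij.1 < ij.2].
set G := [set ij : 'I_K * 'I_K | ij.2 < ij.1].
set D := [set ij : 'I_K * 'I_K | ij.1 == ij.2].
have hG : #|G| = #|L|.
  have -> : G = [set (fun ij : 'I_K * 'I_K => (ij.2, ij.1)) x | x in L].
    apply/setP => -[i j]; rewrite !inE; apply/idP/imsetP.
      by move=> h; exists (j, i); rewrite ?inE.
    by case=> -[i' j']; rewrite inE /= => h [-> ->].
  by apply: card_imset => -[? ?] [? ?] [-> ->].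
have hD : #|D| = K.
  have -> : D = [set (fun i : 'I_K => (i, i)) x | x in 'I_K].
    apply/setP => -[i j]; rewrite !inE; apply/idP/imsetP.
      by move=> /eqP /= <-; exists i.
    by case=> i' _ [-> ->].
  by rewrite card_imset ?card_ord // => ? ? [].
have hC : ~: L = G :|: D.
  apply/setP => -[i j]; rewrite !inE /=.
  by rewrite -leqNgt leq_eqVlt orbC eq_sym.
have hI : G :&: D = set0.
  apply/setP => -[i j]; rewrite !inE /=.
  by apply/negbTE/andP => -[] /[swap] /eqP ->; rewrite ltnn.
have := cardsC L; rewrite hC cardsU hI cards0 hG hD card_prod card_ord => h.
rewrite bin2.
move: h; rewrite -/L; move: #|L| => l h; have -> : K * K.-1 = l.*2 by move: h; clear; case: K => [|k] /=; lia.
by rewrite half_double.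
Qed.

Lemma uniq_noninv (K : nat) (sigma : 'S_K) :
  'C(K, 2) - 1 <= coxeter_len sigma ->
  forall i j i' j' : 'I_K, i < j -> sigma i < sigma j -> i' < j' ->
    sigma i' < sigma j' -> (i, j) = (i', j').
Proof.
move=> H i j i' j' hij sij hij' sij'.
apply/eqP; apply/negPn/negP => hne.
set L := [set ij : 'I_K * 'I_K | ij.1 < ij.2].
set I := [set ij : 'I_K * 'I_K | (ij.1 < ij.2) && (sigma ij.2 < sigma ij.1)].
have hIL : I \subset L by apply/subsetP => x; rewrite !inE => /andP[].
have h2 : [set (i, j); (i', j')] \subset L :\: I.
  apply/subsetP => x; rewrite !inE => /orP[] /eqP -> /=; apply/andP; split;
    rewrite ?hij ?hij' //= -leqNgt; exact: ltnW.
have := subset_leq_card h2; rewrite cards2 hne cardsD (setIidPr hIL).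
have := subset_leq_card hIL.
rewrite /coxeter_len -/I in H.
have := card_lt_pairs K; rewrite -/L.
move: #|L| #|I| H => l m H.
move: 'C(K, 2) H => c H.
lia.
Qed.

Lemma inst_mono_le k (tau : 'S_k) s P : is_instance tau s P ->
  forall i j : 'I_k, i <= j -> P i <= P j.
Proof.
move=> [_ [hm _]] i j; rewrite leq_eqVlt => /orP[/eqP e|lt].
  by rewrite (val_inj e).
exact: ltnW (hm _ _ lt).
Qed.

Lemma inst_lt_ord k (tau : 'S_k) s P : is_instance tau s P ->
  forall i j : 'I_k, P i < P j -> i < j.
Proof.
move=> hi i j hP; rewrite ltnNge; apply/negP => hle.
by have := inst_mono_le hi hle; rewrite leqNgt hP.
Qed.

Lemma viol k (tau : 'S_k) s P t (j j' : 'I_k) :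
  is_instance tau s P -> uniq s ->
  P j < t -> ~~ (nth 0 s t < nth 0 s (P j)) ->
  t < P j' -> ~~ (nth 0 s (P j') < nth 0 s t) ->
  [/\ nth 0 s (P j) < nth 0 s t, nth 0 s t < nth 0 s (P j'),
      j < j' & tau j < tau j'].
Proof.
move=> hi hu hjt hj hj't hj'.
have [hs [hm hv]] := hi.
have ts : t < size s by apply: ltn_trans hj't (hs j').
have d1 : nth 0 s (P j) != nth 0 s t.
  by rewrite nth_uniq // neq_ltn hjt.
have d2 : nth 0 s t != nth 0 s (P j').
  by rewrite nth_uniq // neq_ltn hj't.
have l1 : nth 0 s (P j) < nth 0 s t by rewrite ltn_neqAle d1 leqNgt.
have l2 : nth 0 s t < nth 0 s (P j') by rewrite ltn_neqAle d2 leqNgt.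
split => //.
  by apply: (inst_lt_ord hi); apply: ltn_trans hj't.
by rewrite -hv; apply: ltn_trans l2.
Qed.

Lemma main_case (K : nat) (sigma : 'S_K) :
  'C(K, 2) - 1 <= coxeter_len sigma ->
  forall (a b : 'I_K), a < b -> sigma a < sigma b ->
  forall (s : seq nat) P, uniq s -> locally_minimal sigma [:: (a, b)] s P ->
  forall t (j j' : 'I_K),
  P j < t -> ~~ (nth 0 s t < nth 0 s (P j)) ->
  t < P j' -> ~~ (nth 0 s (P j') < nth 0 s t) -> False.
Proof.
move=> H a b hab sab s P hu [hi hlm] t j j' hjt hj hj't hj'.
have [l1 l2 jj' sj] := viol hi hu hjt hj hj't hj'.
have [ej ej'] : j = a /\ j' = b.
  by case: (uniq_noninv H jj' sj hab sab) => -> ->.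
subst j j'.
set f := nth 0 s.
have [hs [hm hv]] := hi.
have ts : t < size s by apply: ltn_trans hj't (hs b).
have un : forall i j : 'I_K, i < j -> sigma i < sigma j -> i = a /\ j = b.
  by move=> i j' x y; case: (uniq_noninv H x y hab sab) => -> ->.
have sinj : forall i j : 'I_K, i != j -> sigma i != sigma j.
  by move=> i j' /eqP ne; apply/eqP => e; apply: ne; apply: perm_inj e.
have hab' : a != b by apply/eqP => e; rewrite e ltnn in hab.
have nobet : forall i : 'I_K, a < i -> i < b -> False.
  move=> i ai ib.
  case: (ltngtP (sigma a) (sigma i)) => [x|x|x].
  - by case: (un _ _ ai x) => _ e; rewrite e ltnn in ib.
  - by case: (un _ _ ib (ltn_trans x sab)) => e _; rewrite e ltnn in ai.
  - have : a != i by apply/eqP => e; rewrite e ltnn in ai.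
    by move/sinj/eqP; apply; apply: val_inj.
have fd : forall i : 'I_K, f t != f (P i).
  move=> i; rewrite /f nth_uniq ?hs //; apply/eqP => e.
  case: (leqP i a) => ia.
    by have := inst_mono_le hi ia; rewrite -e leqNgt hjt.
  case: (leqP b i) => bi.
    by have := inst_mono_le hi bi; rewrite -e leqNgt hj't.
  exact: nobet ia bi.
have sneq : forall i j : 'I_K, i != j -> (sigma i < sigma j) || (sigma j < sigma i).
  by move=> i j' /sinj; rewrite -val_eqE /= neq_ltn.
have v1 : forall i : 'I_K, i != b -> (f t < f (P i)) = (sigma b < sigma i).
  move=> i ib; case h: (sigma b < sigma i).
    by apply: ltn_trans l2 _; rewrite /f hv.
  apply/negbTE/negP => ft.
  have sib : sigma i < sigma b by move: (sneq _ _ ib); rewrite h orbF.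
  have sai : sigma a < sigma i by rewrite -hv; apply: ltn_trans l1 ft.
  case: (ltngtP a i) => [x|x|x].
  - by case: (un _ _ x sai) => _ e; rewrite e eqxx in ib.
  - by case: (un _ _ (ltn_trans x hab) sib) => e _; rewrite e ltnn in x.
  - by rewrite (val_inj x) ltnn in sai.
have v2 : forall i : 'I_K, i != b -> (f (P i) < f t) = (sigma i < sigma b).
  move=> i ib; case h: (sigma i < sigma b).
    rewrite ltn_neqAle eq_sym fd leqNgt v1 //= -leqNgt; exact: ltnW.
  apply/negbTE/negP => ft.
  have sib : sigma b < sigma i by move: (sneq _ _ ib); rewrite h.
  by move: (v1 _ ib); rewrite sib => /(ltn_trans ft); rewrite ltnn.
set Q := fun i : 'I_K => if i == b then t else P i.
have K0 : 0 < K by apply: leq_ltn_trans (leq0n a) (ltn_ord a).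
have Km : K.-1 < K by rewrite prednK.
pose i0 := Ordinal K0. pose im := Ordinal Km.
pose a0 := P i0. pose b0 := P im.
have lo : forall i, a0 <= P i by move=> i; exact: (@inst_mono_le _ _ _ _ hi i0 i (leq0n i)).
have up : forall i, P i <= b0.
  move=> i; apply: (@inst_mono_le _ _ _ _ hi i im); by rewrite /= -ltnS prednK.
have [_ hmin] := hlm a0 b0 (ex_intro _ i0 erefl) (ex_intro _ im erefl)
  (fun i => introT andP (conj (lo i) (up i))).
have b0s : b0 < size s := hs im.
have qr : forall i, a0 <= Q i <= b0.
  move=> i; rewrite /Q; case: eqP => _; last by rewrite lo up.
  have := lo a; have := up b; lia.
have qmono : forall i j : 'I_K, i < j -> Q i < Q j.
  move=> i j ij; rewrite /Q; case: eqP => [ib|ib]; case: eqP => [jb|jb].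
  - by rewrite ib jb ltnn in ij.
  - subst i; apply: (ltn_trans hj't); exact: hm.
  - subst j; case: (ltngtP i a) => [x|x|x].
    + by apply: ltn_trans hjt; exact: hm.
    + by case: (nobet _ x ij).
    + by rewrite (val_inj x).
  - exact: hm.
have qval : forall i j : 'I_K, (f (Q i) < f (Q j)) = (sigma i < sigma j).
  move=> i j; rewrite /Q; case: eqP => [ib|/eqP ib]; case: eqP => [jb|/eqP jb].
  - by subst; rewrite !ltnn.
  - by subst i; rewrite v1.
  - by subst j; rewrite v2.
  - exact: hv.
have sz : size (drop a0 (take b0.+1 s)) = b0.+1 - a0.
  by rewrite size_drop size_takel.
have qinst : is_instance sigma (drop a0 (take b0.+1 s)) (fun i => Q i - a0).
  split; [|split].
  - by move=> i; rewrite sz; have := qr i; lia.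
  - by move=> i j ij; have := qmono _ _ ij; have := qr i; have := qr j; lia.
  - move=> i j; rewrite !nth_drop !subnKC ?(andP (qr i)).1 ?(andP (qr j)).1 //.
    by rewrite !nth_take ?ltnS ?(andP (qr i)).2 ?(andP (qr j)).2 //; apply: qval.
have := hmin _ qinst; rewrite /widths /= /Q eqxx (negbTE hab') andbT.
move/orP => [h|/eqP h]; have := lo a; have := up b; lia.
Qed.

Lemma perm_seq_uniq N (x : 'S_N) : uniq (perm_seq x).
Proof.
by rewrite /perm_seq map_inj_uniq ?enum_uniq // => i j /val_inj /perm_inj.
Qed.

Lemma split_viol (K N : nat) (x : 'S_N) (P : 'I_K -> nat) (t : nat) :
  ((forall j, P j < t -> nth 0 (perm_seq x) t < nth 0 (perm_seq x) (P j)) \/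
   (forall j, t < P j -> nth 0 (perm_seq x) (P j) < nth 0 (perm_seq x) t))
  \/ exists j j' : 'I_K,
   [/\ P j < t, ~~ (nth 0 (perm_seq x) t < nth 0 (perm_seq x) (P j)),
       t < P j' & ~~ (nth 0 (perm_seq x) (P j') < nth 0 (perm_seq x) t)].
Proof.
case: (boolP [forall j : 'I_K, (P j < t) ==>
   (nth 0 (perm_seq x) t < nth 0 (perm_seq x) (P j))]) => [/forallP h|/forallPn [j1]].
  by left; left => j hj; exact: (implyP (h j) hj).
rewrite negb_imply => /andP [hj1 hf1].
case: (boolP [forall j : 'I_K, (t < P j) ==>
   (nth 0 (perm_seq x) (P j) < nth 0 (perm_seq x) t)]) => [/forallP h|/forallPn [j2]].
  by left; right => j hj; exact: (implyP (h j) hj).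
rewrite negb_imply => /andP [hj2 hf2].
by right; exists j1, j2.
Qed.

Theorem mainTheorem18 (K : nat) (sigma : 'S_K) :
  'C(K, 2) - 1 <= coxeter_len sigma -> admits_bountiful sigma.
Proof.
move=> H.
case: (boolP [exists ij : 'I_K * 'I_K, (ij.1 < ij.2) && (sigma ij.1 < sigma ij.2)])
  => [/existsP [[a b] /andP [hab sab]] | hno].
  exists [:: (a, b)]; split; first by rewrite /width_system /= hab.
  move=> N x P hlm t _ _.
  case: (split_viol x P t) => // -[j [j' [h1 h2 h3 h4]]].
  by case: (main_case H hab sab (perm_seq_uniq x) hlm h1 h2 h3 h4).
exists [::]; split => //.
move=> N x P hlm t _ _.
case: (split_viol x P t) => // -[j [j' [h1 h2 h3 h4]]].
have [_ _ jj' sj] := viol hlm.1 (perm_seq_uniq x) h1 h2 h3 h4.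
by case/negP: hno; apply/existsP; exists (j, j'); rewrite /= jj' sj.
Qed.
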